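(* Let $A\in M_n(R)$ be non-singular, with left definite form $\bar A$ and right definite form $\tilde A$, i.e. $A=P\bar A=\tilde A Q$ for invertible matrices $P,Q$ and definite matrices $\bar A,\tilde A$. Then (a) $\bar A^{\nabla\nabla}\cong_\nu \bar A^{\nabla}\cong_\nu A^\nabla A$ and $\tilde A^{\nabla\nabla}\cong_\nu \tilde A^{\nabla}\cong_\nu AA^\nabla$; (b) $A^{\nabla\nabla}\cong_\nu PA^\nabla P$.
   Context: Supertropical semiring $R=T\cup G\cup\{-\infty\}$: $T=\mathcal G$ an ordered abelian group (tangible), $G=\{a^\nu\}$ a copy (ghost); $a+b$ is the element of larger $\nu$-value if the $\nu$-values differ and $a^\nu$ if equal; multiplication adds $\nu$-values, is ghost if a factor is ghost, $-\infty$ absorbing; $0_R=-\infty$, $1_R=0$. For matrices, $A\cong_\nu B$ means $a_{i,j}^\nu=b_{i,j}^\nu$ for all $i,j$. $\det(A)=\sum_{\sigma\in S_n}\prod_i a_{i,\sigma(i)}$; $A$ non-singular means $\det(A)\in T$. $\operatorname{adj}(A)_{i,j}=\det(A_{j,i})$ (minor deleting row $j$, column $i$), and for non-singular $A$, $A^\nabla=\det(A)^{-1}\operatorname{adj}(A)$; $A^{\nabla\nabla}=(A^\nabla)^\nabla$. A matrix is invertible iff it is a generalized permutation matrix (permutation matrix times diagonal matrix with tangible diagonal). A matrix is definite if its diagonal entries are $1_R$ and its determinant is $1_R$. Every non-singular $A$ can be written $A=P\bar A$ ($P$ invertible, $\bar A$ definite; left definite form) and $A=\tilde A Q$ ($Q$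 invertible, $\tilde A$ definite; right definite form), obtained by moving the unique dominant permutation track to the diagonal and normalizing it to $1_R$. *)

(* Defs.v *)
From HB Require Import structures.
From mathcomp Require Import all_boot all_order all_algebra all_fingroup.
Set Implicit Arguments. Unset Strict Implicit. Unset Printing Implicit Defensive.
Import Order.TTheory GRing.Theory.
Local Open Scope ring_scope.

Record is_oag (G : zmodType) (le : rel G) : Prop := {
  oag_refl : reflexive le;
  oag_antisym : antisymmetric le;
  oag_trans : transitive le;
  oag_total : total le;
  oag_add : forall x y z, le x y -> le (x + z) (y + z)
}.

Section Supertropical.
Context (G : zmodType) (le : rel G).

Definition oag_lt (a b : G) : bool := le a b && ~~ le b a.

Inductive stelt : Type :=
| Tang of G
| Ghost of G
| NegInf.

Definition stadd (x y : stelt) : stelt :=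
  match x, y with
  | NegInf, _ => y
  | _, NegInf => x
  | (Tang a | Ghost a), (Tang b | Ghost b) =>
      if oag_lt a b then y else if oag_lt b a then x else Ghost a
  end.

Definition stmul (x y : stelt) : stelt :=
  match x, y with
  | NegInf, _ | _, NegInf => NegInf
  | Tang a, Tang b => Tang (a + b)
  | Tang a, Ghost b | Ghost a, Tang b | Ghost a, Ghost b => Ghost (a + b)
  end.

Definition st0 : stelt := NegInf.
Definition st1 : stelt := Tang 0.

Definition nu (x : stelt) : stelt :=
  match x with Tang a | Ghost a => Ghost a | NegInf => NegInf end.

Definition tangible (x : stelt) : bool :=
  if x is Tang _ then true else false.

(* inverse of a tangible element (junk elsewhere; only used on tangibles) *)
Definition stinv (x : stelt) : stelt :=
  match x with Tang a => Tang (- a) | Ghost a => Ghost (- a) | NegInf => NegInf end.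

Definition stmx_mul {m n p : nat} (A : 'M[stelt]_(m, n)) (B : 'M[stelt]_(n, p))
  : 'M[stelt]_(m, p) :=
  \matrix_(i, j) \big[stadd/st0]_(k < n) stmul (A i k) (B k j).

Definition stmx_scale {m n : nat} (c : stelt) (A : 'M[stelt]_(m, n)) : 'M[stelt]_(m, n) :=
  \matrix_(i, j) stmul c (A i j).

Definition stmx1 (n : nat) : 'M[stelt]_n :=
  \matrix_(i, j) if i == j then st1 else st0.

Definition stdet {n : nat} (A : 'M[stelt]_n) : stelt :=
  \big[stadd/st0]_(s : 'S_n) \big[stmul/st1]_(i < n) A i (s i).

Definition nonsingular {n : nat} (A : 'M[stelt]_n) : bool := tangible (stdet A).

Definition skip_ord {n : nat} (j : 'I_n) (k : 'I_n.-1) : 'I_n := insubd j (bump j k).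
Definition stminor {n : nat} (A : 'M[stelt]_n) (j i : 'I_n) : 'M[stelt]_n.-1 :=
  \matrix_(k, l) A (skip_ord j k) (skip_ord i l).

Definition stadj {n : nat} (A : 'M[stelt]_n) : 'M[stelt]_n :=
  \matrix_(i, j) stdet (stminor A j i).

Definition stnabla {n : nat} (A : 'M[stelt]_n) : 'M[stelt]_n :=
  stmx_scale (stinv (stdet A)) (stadj A).

Definition nu_equiv {m n : nat} (A B : 'M[stelt]_(m, n)) : Prop :=
  forall i j, nu (A i j) = nu (B i j).

Definition invertible {n : nat} (A : 'M[stelt]_n) : Prop :=
  exists B : 'M[stelt]_n, stmx_mul A B = stmx1 n /\ stmx_mul B A = stmx1 n.

Definition definite {n : nat} (A : 'M[stelt]_n) : Prop :=
  (forall i, A i i = st1) /\ stdet A = st1.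

End Supertropical.

(* Main.v *)
Require Import Defs.
From HB Require Import structures.
From mathcomp Require Import all_boot all_order all_algebra all_fingroup.
From mathcomp Require Import zify.

Set Implicit Arguments. Unset Strict Implicit. Unset Printing Implicit Defensive.

Lemma stmulA (G : zmodType) : associative (@stmul G).
Proof. by move=> [a|a|] [b|b|] [c|c|] //=; rewrite GRing.addrA. Qed.
Lemma stmulC (G : zmodType) : commutative (@stmul G).
Proof. by move=> [a|a|] [b|b|] //=; rewrite GRing.addrC. Qed.
Lemma stmul1m (G : zmodType) : left_id (@st1 G) (@stmul G).
Proof. by move=> [a|a|] //=; rewrite GRing.add0r. Qed.
HB.instance Definition _ (G : zmodType) :=
  Monoid.isComLaw.Build (stelt G) (@st1 G) (@stmul G) (@stmulA G) (@stmulC G) (@stmul1m G).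

Section Main.
Context (G : zmodType) (le : rel G) (HG : is_oag le).
Local Notation R := (stelt G).
Local Notation add := (stadd le).
Local Notation mul := (@stmul G).
Local Notation one := (@st1 G).
Local Notation zero := (@st0 G).
Local Open Scope ring_scope.

Let leR : reflexive le := oag_refl HG.
Let leT : transitive le := oag_trans HG.
Let leA : antisymmetric le := oag_antisym HG.
Let leTot : total le := oag_total HG.
Lemma le_add2 a b c d : le a b -> le c d -> le (a + c) (b + d).
Proof.
move=> h1 h2; apply: (leT (oag_add HG c h1)).
by rewrite ![b + _]GRing.addrC; apply: oag_add.
Qed.

Definition vle (x y : R) : bool :=
  match x, y with
  | NegInf, _ => true
  | _, NegInf => false
  | (Tang a | Ghost a), (Tang b | Ghost b) => le a b
  end.

Lemma vle_refl x : vle x x.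
Proof. by case: x => //= a; apply: leR. Qed.
Lemma vle_trans y x z : vle x y -> vle y z -> vle x z.
Proof. by case: x => [a|a|]; case: y => [b|b|]; case: z => [c|c|] //=; apply: leT. Qed.
Lemma vle_total x y : vle x y || vle y x.
Proof. by case: x => [a|a|]; case: y => [b|b|] //=; apply: leTot. Qed.
Lemma vle_nu x y : vle x y -> vle y x -> nu x = nu y.
Proof.
by case: x => [a|a|]; case: y => [b|b|] //= h1 h2; rewrite (leA (introT andP (conj h1 h2))).
Qed.
Lemma nu_vle x y : nu x = nu y -> vle x y.
Proof. by case: x => [a|a|]; case: y => [b|b|] //= [->]; apply: leR. Qed.
Lemma vle_nu_l x y : vle (nu x) y = vle x y.
Proof. by case: x. Qed.
Lemma vle_nu_r x y : vle x (nu y) = vle x y.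
Proof. by case: x; case: y. Qed.
Lemma vle0 x : vle zero x. Proof. by []. Qed.

Lemma add_spec x y :
  [&& vle x (add x y), vle y (add x y) & vle (add x y) x || vle (add x y) y].
Proof.
case: x => [a|a|]; case: y => [b|b|] //=; rewrite ?leR ?orbT //;
rewrite /oag_lt; case ab: (le a b); case ba: (le b a) => //=;
  rewrite ?leR ?ab ?ba ?orbT //; by move: (leTot a b); rewrite ab ba.
Qed.
Lemma vle_add_l x y : vle x (add x y).
Proof. by case/and3P: (add_spec x y). Qed.
Lemma vle_add_r y x : vle y (add x y).
Proof. by case/and3P: (add_spec x y). Qed.
Lemma vle_add_lub x y z : vle x z -> vle y z -> vle (add x y) z.
Proof.
by case/and3P: (add_spec x y) => _ _ /orP [h|h] hx hy; apply: vle_trans h _.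
Qed.
Lemma nu_add x y : nu (add x y) = nu x \/ nu (add x y) = nu y.
Proof.
case/and3P: (add_spec x y) => h1 h2 /orP [h|h]; [left|right]; exact: vle_nu.
Qed.
Lemma vle_mul x x' y y' : vle x x' -> vle y y' -> vle (mul x y) (mul x' y').
Proof.
by case: x => [a|a|]; case: x' => [b|b|]; case: y => [c|c|]; case: y' => [d|d|] //=;
  apply: le_add2.
Qed.
Lemma nu_mul x y : nu (mul x y) = mul (nu x) (nu y).
Proof. by case: x; case: y. Qed.
Lemma mulx0 x : mul x zero = zero. Proof. by case: x. Qed.

Lemma vle_nu_eq x x' y : nu x = nu x' -> vle x y = vle x' y.
Proof. by move=> h; rewrite -vle_nu_l h vle_nu_l. Qed.
Lemma vle_nu_eqr x y y' : nu y = nu y' -> vle x y = vle x y'.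
Proof. by move=> h; rewrite -vle_nu_r h vle_nu_r. Qed.

Lemma big_vle_ub (I : Type) (r : seq I) (P : pred I) (F : I -> R) c :
  (forall i, P i -> vle (F i) c) -> vle (\big[add/zero]_(i <- r | P i) F i) c.
Proof. by move=> H; apply: (big_ind (fun x => vle x c)) => // x y; apply: vle_add_lub. Qed.

Lemma vle_big (I : eqType) (r : seq I) (P : pred I) (F : I -> R) i :
  i \in r -> P i -> vle (F i) (\big[add/zero]_(j <- r | P j) F j).
Proof.
elim: r => // a r IH; rewrite inE big_cons => /orP [/eqP -> | ir] Pi.
  by rewrite Pi; apply: vle_add_l.
case: (P a); last exact: IH.
by apply: vle_trans (vle_add_r _ _); apply: IH.
Qed.

Lemma vle_bigT (I : finType) (P : pred I) (F : I -> R) i :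
  P i -> vle (F i) (\big[add/zero]_(j | P j) F j).
Proof. by move=> Pi; apply: vle_big => //; rewrite mem_index_enum. Qed.

Lemma vle_bigT1 (I : finType) (F : I -> R) i :
  vle (F i) (\big[add/zero]_j F j).
Proof. exact: (@vle_big _ _ xpredT). Qed.

Lemma vle_mul_big_ub x (I : Type) (r : seq I) (P : pred I) (F : I -> R) c :
  (forall i, P i -> vle (mul x (F i)) c) ->
  vle (mul x (\big[add/zero]_(i <- r | P i) F i)) c.
Proof.
move=> H; apply: (big_ind (fun y => vle (mul x y) c)) => //.
  by rewrite mulx0.
move=> y z hy hz; case: (nu_add y z) => e.
  by rewrite -vle_nu_l nu_mul e -nu_mul vle_nu_l.
by rewrite -vle_nu_l nu_mul e -nu_mul vle_nu_l.
Qed.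

Lemma vle_prod (I : Type) (r : seq I) (P : pred I) (F F' : I -> R) :
  (forall i, P i -> vle (F i) (F' i)) ->
  vle (\big[mul/one]_(i <- r | P i) F i) (\big[mul/one]_(i <- r | P i) F' i).
Proof.
move=> H; apply: (big_ind2 (fun x y => vle x y)) => //; first exact: vle_refl.
by move=> ? ? ? ?; apply: vle_mul.
Qed.


Definition pw n (M : 'M[R]_n) (s : 'S_n) := \big[mul/one]_(i < n) M i (s i).
Definition aw n (M : 'M[R]_n) (j : 'I_n) (s : 'S_n) :=
  \big[mul/one]_(i < n | i != j) M i (s i).

Lemma det_ub n (M : 'M[R]_n) x c :
  (forall s, vle (mul x (pw M s)) c) -> vle (mul x (stdet le M)) c.
Proof. by move=> H; apply: vle_mul_big_ub => s _; apply: H. Qed.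
Lemma det_lb n (M : 'M[R]_n) s : vle (pw M s) (stdet le M).
Proof. exact: (@vle_bigT _ predT). Qed.

Lemma skip_lift n (j : 'I_n) k : skip_ord j k = lift j k.
Proof.
apply: val_inj; rewrite /skip_ord val_insubd /=.
by case: ifP => // h; move: (ltn_ord (lift j k)); rewrite /= h.
Qed.

Lemma aw_lift n (M : 'M[R]_n.+1) (i j : 'I_n.+1) (t : 'S_n) :
  \big[mul/one]_(k < n) M (lift j k) (lift i (t k)) = aw M j (lift_perm j i t).
Proof.
rewrite /aw.
case: (pickP 'I_n) => [k0 _ | n0]; last first.
  by rewrite !big1 // => [j1 /unlift_some[i1] | i1 _]; have:= n0 i1.
symmetry; rewrite (reindex (lift j)).
  by apply: eq_big => [k | k _] /=; [rewrite eq_sym neq_lift | congr (M _ _); apply: lift_perm_lift].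
exists (fun k => odflt k0 (unlift j k)) => k; first by rewrite liftK.
rewrite inE eq_sym; case/unlift_some=> k1 -> ->; by [].
Qed.

Lemma minor_prod n (M : 'M[R]_n.+1) (i j : 'I_n.+1) (t : 'S_n) :
  \big[mul/one]_(k < n) (stminor M j i) k (t k) = aw M j (lift_perm j i t).
Proof.
rewrite -aw_lift; apply: eq_bigr => k _; by rewrite mxE !skip_lift.
Qed.

Lemma adj_ub n (M : 'M[R]_n) i j x c :
  (forall s : 'S_n, s j = i -> vle (mul x (aw M j s)) c) ->
  vle (mul x (stadj le M i j)) c.
Proof.
case: n M i j => [|n] M i j; first by case: i.
move=> H; rewrite mxE /stdet; apply: vle_mul_big_ub => t _.
by rewrite minor_prod; apply: H; rewrite lift_perm_id.
Qed.

Lemma adj_lb n (M : 'M[R]_n) i j (s : 'S_n) : s j = i -> vle (aw M j s) (stadj le M i j).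
Proof.
case: n M i j s => [|n] M i0 j0 s sji; first by clear sji; case: i0.
rewrite mxE /stdet.
pose ulsf i (s' : 'S_n.+1) k := odflt k (unlift (s' i) (s' (lift i k))).
have ulsfK i (s' : 'S_n.+1) k: lift (s' i) (ulsf i s' k) = s' (lift i k).
  rewrite /ulsf; have:= neq_lift i k.
  by rewrite -(can_eq (permK s')) => /unlift_some[] ? ? ->.
have inj_ulsf: injective (ulsf j0 s).
  apply: can_inj (ulsf (s j0) s^-1%g) _ => k'.
  by rewrite {1}/ulsf ulsfK !permK liftK.
have -> : s = lift_perm j0 i0 (perm inj_ulsf).
  apply/permP=> k; case: (unliftP j0 k) => [k'|] ->; rewrite ?lift_perm_id //.
  by rewrite lift_perm_lift -sji permE ulsfK.
by rewrite -minor_prod; apply: (@vle_bigT _ predT (fun t : 'S_n => _)).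
Qed.

Lemma pw_split n (M : 'M[R]_n) (s : 'S_n) j : pw M s = mul (M j (s j)) (aw M j s).
Proof. by rewrite /pw (bigD1 j). Qed.

Lemma prod_ifD1 n (k : 'I_n) a (F : 'I_n -> R) :
  \big[mul/one]_(l < n) (if l == k then a else F l) =
  mul a (\big[mul/one]_(l < n | l != k) F l).
Proof.
rewrite (bigD1 k) //= eqxx; congr (mul _ _).
by apply: eq_bigr => l /negbTE ->.
Qed.

Lemma prod_split_le n (C : {set 'I_n}) (f g : 'I_n -> R) :
  vle (\big[mul/one]_(l in C) f l) one -> \big[mul/one]_(l in C) g l = one ->
  (forall l, l \notin C -> f l = g l) ->
  vle (\big[mul/one]_(l < n) f l) (\big[mul/one]_(l < n) g l).
Proof.
move=> hf hg he; rewrite [X in vle X _](bigID (mem C)) [X in vle _ X](bigID (mem C)) /= hg stmul1m.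
have -> : \big[mul/one]_(i < n | ~~ (i \in C)) f i = \big[mul/one]_(i < n | ~~ (i \in C)) g i.
  by apply: eq_bigr => l hl; apply: he.
by rewrite -{2}[\big[mul/one]_(i < n | _) g i]stmul1m; apply: vle_mul => //; apply: vle_refl.
Qed.

Lemma restr_ex n (s : 'S_n) (C : {set 'I_n}) :
  (forall l, (s l \in C) = (l \in C)) ->
  exists r : 'S_n, forall l, r l = if l \in C then s l else l.
Proof.
move=> hC.
have inj : injective (fun l => if l \in C then s l else l).
  move=> x y /=; case xC: (x \in C); case yC: (y \in C) => //.
  - exact: perm_inj.
  - by move=> e; move: yC; rewrite -e hC xC.
  - by move=> e; move: xC; rewrite e hC yC.
by exists (perm inj) => l; rewrite permE.
Qed.

Lemma one_le_prod (I : Type) (r : seq I) (P : pred I) (F : I -> R) :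
  (forall i, P i -> vle one (F i)) -> vle one (\big[mul/one]_(i <- r | P i) F i).
Proof.
move=> H; apply: (big_ind (fun x => vle one x)) => //; first exact: vle_refl.
by move=> x y hx hy; rewrite -(stmul1m one); apply: vle_mul.
Qed.

Lemma prod_le_one (I : Type) (r : seq I) (P : pred I) (F : I -> R) :
  (forall i, P i -> vle (F i) one) -> vle (\big[mul/one]_(i <- r | P i) F i) one.
Proof.
move=> H; apply: (big_ind (fun x => vle x one)) => //; first exact: vle_refl.
by move=> x y hx hy; rewrite -(stmul1m one); apply: vle_mul.
Qed.

Lemma adj_diag_lb n (N : 'M[R]_n) i :
  (forall a, vle one (N a a)) -> vle one (stadj le N i i).
Proof.
move=> hd; apply: vle_trans (adj_lb N (perm1 i)).
have -> : one = \big[mul/one]_(l < n | l != i) one by rewrite big1.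
by apply: vle_prod => l _; rewrite perm1.
Qed.

Lemma adj_offdiag_lb n (N : 'M[R]_n) i j :
  (forall a, vle one (N a a)) -> i != j -> vle (N i j) (stadj le N i j).
Proof.
move=> hd ij; apply: vle_trans (adj_lb N (tpermR i j)).
rewrite /aw (bigD1 i) //= tpermL.
have e : N i j = mul (N i j) one by rewrite stmulC stmul1m.
rewrite {1}e; apply: vle_mul; first exact: vle_refl.
apply: one_le_prod => l /andP [lj li]; rewrite tpermD 1?eq_sym //.
Qed.

Lemma porbit_inv n (s : 'S_n) j l : (s l \in porbit s j) = (l \in porbit s j).
Proof.
have e : s l = (s ^+ 1)%g l by rewrite expg1.
by rewrite porbit_sym e porbit_perm porbit_sym.
Qed.

Lemma porbit_step n (s : 'S_n) l : porbit s (s l) = porbit s l.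
Proof. have e : s l = (s ^+ 1)%g l by rewrite expg1. by rewrite e porbit_perm. Qed.

Lemma tperm_split n (s : 'S_n) x y :
  x != y -> x \in porbit s y -> x \notin porbit (tperm x y * s)%g y.
Proof.
move=> xy xs.
have h1 := porbits_mul_tperm s x y.
have h2 := porbits_mul_tperm (tperm x y * s)%g x y.
cbv zeta in h1, h2; rewrite mulgA tperm2 mul1g in h2.
rewrite xs xy /= in h1; rewrite xy /= in h2.
move: h1 h2; case: (x \notin _) => //=; lia.
Qed.

Definition cnt n (s : 'S_n) := #|[set l | s l != l]|.

Section Path.
Variables (n : nat) (E N : 'M[R]_n).
Hypothesis EN : forall a b c, vle (mul (E a b) (N b c)) (E a c).
Hypothesis NE : forall a b, vle (N a b) (E a b).
Hypothesis Ed : forall a, vle (E a a) one.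
Hypothesis Nd : forall a, vle one (N a a).

Definition Pp (t : 'S_n) :=
  vle (pw N t) one /\ forall i j, vle (mul (E i (t j)) (aw N j t)) (E i j).

Lemma path_step (s : 'S_n) : (forall t : 'S_n, (cnt t < cnt s)%N -> Pp t) -> Pp s.
Proof.
move=> IH.
have H1 : forall i j, s j != j -> vle (mul (E i (s j)) (aw N j s)) (E i j).
  move=> i j sjj.
  pose q := (s^-1)%g j.
  have sq : s q = j by rewrite /q permKV.
  have qj : q != j by apply: contraNneq sjj => e; rewrite -{1}e sq eqxx.
  pose t := (tperm q j * s)%g.
  have tq : t q = s j by rewrite permM tpermL.
  have tj : t j = j by rewrite permM tpermR sq.
  have ct : (cnt t < cnt s)%N.
    rewrite /cnt (cardsD1 j [set l | s l != l]) inE sjj add1n ltnS.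
    apply: subset_leq_card; apply/subsetP => l; rewrite !inE => tl.
    have lj : l != j by apply: contraNneq tl => ->; rewrite tj eqxx.
    rewrite lj /=; case: (eqVneq l q) => [->|lq]; first by rewrite sq eq_sym.
    by move: tl; rewrite permM tpermD // eq_sym.
  have [_ IHp] := IH t ct.
  have h := IHp i q; rewrite tq in h.
  set W := \big[mul/one]_(l < n | (l != j) && (l != q)) N l (s l).
  have e1 : aw N j s = mul (N q j) W by rewrite /aw (bigD1 q) //= sq.
  have e2 : aw N q t = mul (N j j) W.
    rewrite /aw (bigD1 j) 1?eq_sym //= tj; congr (mul _ _).
    apply: eq_big => l; first by rewrite andbC.
    by move=> /andP [lq lj]; rewrite permM tpermD // eq_sym.
  rewrite e2 in h; rewrite e1.
  have -> : mul (E i (s j)) (mul (N q j) W) = mul (mul (E i (s j)) W) (N q j).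
    by rewrite [mul (N q j) W]stmulC stmulA.
  have h2 : vle (mul (E i (s j)) W) (E i q).
    apply: vle_trans h; apply: vle_mul; first exact: vle_refl.
    rewrite -{1}(stmul1m W); apply: vle_mul => //; exact: vle_refl.
  apply: vle_trans (EN i q j).
  by apply: vle_mul => //; apply: vle_refl.
have Hpw : vle (pw N s) one.
  case: (pickP [pred l | s l != l]) => [l0 /= hl0 | h0].
    rewrite (pw_split _ _ l0); have h := H1 l0 l0 hl0.
    apply: vle_trans (Ed l0); apply: vle_trans h.
    apply: vle_mul; [exact: NE | exact: vle_refl].
  rewrite /pw; apply: prod_le_one => l _.
  have -> : s l = l by move: (h0 l) => /= /negbFE /eqP.
  exact: vle_trans (NE l l) (Ed l).
split => // i j; case: (eqVneq (s j) j) => [sj|sj]; last exact: H1.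
rewrite sj.
have haw : vle (aw N j s) one.
  apply: vle_trans Hpw; rewrite (pw_split _ _ j) sj -{1}(stmul1m (aw N j s)).
  by apply: vle_mul => //; apply: vle_refl.
have e : E i j = mul (E i j) one by rewrite stmulC stmul1m.
by rewrite {2}e; apply: vle_mul => //; apply: vle_refl.
Qed.

Lemma path_all (s : 'S_n) : Pp s.
Proof.
suff H : forall m (s : 'S_n), (cnt s <= m)%N -> Pp s by apply: (H (cnt s)).
elim=> [|m IH] s' hs; apply: path_step => t ht.
  by have := leq_trans ht hs.
by apply: IH; rewrite -ltnS; apply: leq_trans ht hs.
Qed.

End Path.

Lemma nu_prod_congr (I : Type) (r : seq I) (P : pred I) (F F' : I -> R) :
  (forall i, P i -> nu (F i) = nu (F' i)) ->
  nu (\big[mul/one]_(i <- r | P i) F i) = nu (\big[mul/one]_(i <- r | P i) F' i).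
Proof.
move=> H; apply: (big_ind2 (fun x y => nu x = nu y)) => //.
by move=> x1 x2 y1 y2 e1 e2; rewrite !nu_mul e1 e2.
Qed.

Lemma nu_stinv (x : R) : nu (stinv x) = stinv (nu x). Proof. by case: x. Qed.
Lemma stinv_mul (x y : R) : stinv (mul x y) = mul (stinv x) (stinv y).
Proof. by case: x => [a|a|]; case: y => [b|b|] //=; rewrite GRing.opprD. Qed.
Lemma mulT0 (x : R) : mul (Tang 0) x = x. Proof. exact: stmul1m. Qed.
Lemma stinv1 : stinv one = one. Proof. by rewrite /= GRing.oppr0. Qed.
Lemma mulx1 (x : R) : mul x one = x. Proof. by rewrite stmulC stmul1m. Qed.

Lemma vle_antisym_nu x y : vle x y -> vle y x -> nu x = nu y.
Proof. exact: vle_nu. Qed.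

Section Definite.
Variables (n : nat) (M : 'M[R]_n).
Hypothesis hdiag : forall i, M i i = one.
Hypothesis hpw : forall s, vle (pw M s) one.

Lemma inv_le (s : 'S_n) (C : {set 'I_n}) :
  (forall l, (s l \in C) = (l \in C)) ->
  vle (\big[mul/one]_(l in C) M l (s l)) one.
Proof.
move=> hC; have [r hr] := restr_ex hC.
have := hpw r; rewrite /pw (bigID (mem C)) /=.
have -> : \big[mul/one]_(i < n | ~~ (i \in C)) M i (r i) = one.
  by apply: big1 => l /negbTE lC; rewrite hr lC hdiag.
rewrite stmulC stmul1m; congr (vle _ _).
by apply: eq_bigr => l lC; rewrite hr lC.
Qed.

Lemma C3 i k j : vle (mul (stadj le M i k) (M k j)) (stadj le M i j).
Proof.
rewrite stmulC; apply: adj_ub => s ski.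
case: (eqVneq k j) => [<-|kj].
  by rewrite hdiag stmul1m; apply: adj_lb.
case: (eqVneq i j) => [eij|ij].
  have h : vle (mul (M k j) (aw M k s)) one.
    by rewrite -eij -ski -pw_split; apply: hpw.
  apply: vle_trans h _; rewrite eij; apply: adj_diag_lb => a; rewrite hdiag.
  exact: vle_refl.
rewrite -prod_ifD1.
case: (boolP (k \in porbit s j)) => kC.
-
  pose p := (s^-1)%g j.
  have sp : s p = j by rewrite /p permKV.
  have pk : k != p by apply: contra_neq ij => e; rewrite -ski e sp.
  pose u := (tperm k p * s)%g.
  have uk : u k = j by rewrite permM tpermL.
  have up : u p = i by rewrite permM tpermR.
  have kCp : k \in porbit s p by rewrite -(porbit_step s p) sp.
  have hsp := tperm_split pk kCp.
  set C := porbit u j.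
  have CE : C = porbit u k by rewrite /C -uk porbit_step.
  have kC' : k \in C by rewrite CE porbit_id.
  have pC : p \notin C by rewrite CE porbit_sym.
  have iC : i \notin C by rewrite CE porbit_sym -up porbit_step.
  have jC : j \in C by apply: porbit_id.
  have invC : forall l, (u l \in C) = (l \in C) by move=> l; apply: porbit_inv.
  have [r hr] : exists r : 'S_n, forall l, r l = if l \in ~: C then u l else l.
    by apply: restr_ex => l; rewrite !inE invC.
  pose s' := (r * tperm i j)%g.
  have s'j : s' j = i by rewrite permM hr inE jC /= tpermR.
  apply: vle_trans (adj_lb M s'j).
  rewrite -(stmul1m (aw M j s')) /aw -prod_ifD1.
  apply: (prod_split_le (C := C)).
  + rewrite (eq_bigr (fun l => M l (u l))); first exact: inv_le.
    move=> l lC; case: eqP => [->|/eqP lk]; first by rewrite uk.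
    have lp : l != p by apply: contraNneq pC => <-.
    by rewrite permM tpermD // eq_sym.
  + apply: big1 => l lC; case: eqP => // /eqP lj.
    have li : l != i by apply: contraNneq iC => <-.
    by rewrite permM hr inE lC /= tpermD ?hdiag // eq_sym.
  + move=> l lC.
    have lk : l != k by apply: contraNneq lC => ->.
    have lj : l != j by apply: contraNneq lC => ->.
    rewrite (negbTE lk) (negbTE lj) permM hr inE lC /=.
    case: (eqVneq l p) => [->|lp]; first by rewrite up tpermL sp.
    have ul : u l = s l by rewrite permM tpermD // eq_sym.
    have sli : s l != i by rewrite -ski (inj_eq perm_inj).
    have slj : s l != j by rewrite -sp (inj_eq perm_inj).
    by rewrite ul tpermD // eq_sym.
-
  set C := porbit s j.
  have invC : forall l, (s l \in C) = (l \in C) by move=> l; apply: porbit_inv.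
  have jC : j \in C by apply: porbit_id.
  have [r hr] : exists r : 'S_n, forall l, r l = if l \in ~: C then s l else l.
    by apply: restr_ex => l; rewrite !inE invC.
  pose s' := (tperm k j * r)%g.
  have s'j : s' j = i by rewrite permM tpermR hr inE kC.
  apply: vle_trans (adj_lb M s'j).
  rewrite -(stmul1m (aw M j s')) /aw -prod_ifD1.
  apply: (prod_split_le (C := C)).
  + rewrite (eq_bigr (fun l => M l (s l))); first exact: inv_le.
    move=> l lC; case: eqP => // e; by move: kC; rewrite -e lC.
  + apply: big1 => l lC; case: eqP => // /eqP lj.
    have lk : k != l by apply: contraNneq kC => ->.
    by rewrite permM tpermD // ?hr ?inE ?lC ?hdiag // eq_sym.
  + move=> l lC.
    have lj : l != j by apply: contraNneq lC => ->.
    rewrite (negbTE lj); case: eqP => [->|/eqP lk].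
      by rewrite permM tpermL hr inE jC.
    by rewrite permM tpermD ?hr ?inE ?(negbTE lC) // eq_sym.
Qed.

Let D := stadj le M.

Lemma D_diag a : vle one (D a a) /\ vle (D a a) one.
Proof.
split; first by apply: adj_diag_lb => b; rewrite hdiag; apply: vle_refl.
rewrite -(stmul1m (D a a)); apply: adj_ub => s sa; rewrite stmul1m.
have := hpw s; rewrite (pw_split _ _ a) sa hdiag stmul1m //.
Qed.

Lemma C2 i j : vle (M i j) (D i j).
Proof.
case: (eqVneq i j) => [<-|ij]; first by rewrite hdiag; case: (D_diag i).
by apply: adj_offdiag_lb => // a; rewrite hdiag; apply: vle_refl.
Qed.

Lemma Md a : vle one (M a a). Proof. by rewrite hdiag; apply: vle_refl. Qed.
Lemma Dd1 a : vle (D a a) one. Proof. by case: (D_diag a). Qed.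
Lemma Dd2 a : vle one (D a a). Proof. by case: (D_diag a). Qed.

Lemma C4 i k j : vle (mul (D i k) (D k j)) (D i j).
Proof.
apply: adj_ub => s sj.
have [_ h] := path_all C3 C2 Dd1 Md s.
by have := h i j; rewrite sj.
Qed.

Lemma DD_adj i j : nu (stadj le D i j) = nu (D i j).
Proof.
have PD := path_all C4 (fun a b => vle_refl (D a b)) Dd1 Dd2.
apply: vle_nu.
  rewrite -(stmul1m (stadj le D i j)); apply: adj_ub => s sj; rewrite stmul1m.
  have [_ h] := PD s; have := h i j; rewrite sj => h2; apply: vle_trans h2.
  rewrite -{1}(stmul1m (aw D j s)); apply: vle_mul; [exact: Dd2 | exact: vle_refl].
case: (eqVneq i j) => [<-|ij].
  by apply: vle_trans (Dd1 i) _; apply: adj_diag_lb; apply: Dd2.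
by apply: adj_offdiag_lb => //; apply: Dd2.
Qed.

Lemma detD : nu (stdet le D) = nu one.
Proof.
have PD := path_all C4 (fun a b => vle_refl (D a b)) Dd1 Dd2.
apply: vle_nu.
  rewrite -(stmul1m (stdet le D)); apply: det_ub => s; rewrite stmul1m.
  by case: (PD s).
apply: vle_trans (det_lb D 1%g); rewrite /pw; apply: one_le_prod => l _.
by rewrite perm1; apply: Dd2.
Qed.

Hypothesis hdet : stdet le M = one.

Lemma nablaM : stnabla le M = D.
Proof. by apply/matrixP => i j; rewrite !mxE hdet stinv1 stmul1m. Qed.

Lemma nablaD_nu i j : nu (stnabla le D i j) = nu (D i j).
Proof.
have -> : stnabla le D i j = mul (stinv (stdet le D)) (stadj le D i j).
  by rewrite [LHS]mxE.
by rewrite nu_mul nu_stinv detD -nu_stinv stinv1 -nu_mul stmul1m DD_adj.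
Qed.

End Definite.

Lemma stmulACA : interchange mul mul.
Proof. by move=> [a|a|] [b|b|] [e|e|] [f|f|] //=; rewrite GRing.addrACA. Qed.

Lemma prod_tang (I : Type) (r : seq I) (P : pred I) (f : I -> G) :
  \big[mul/one]_(i <- r | P i) Tang (f i) = Tang (\sum_(i <- r | P i) f i).
Proof. by symmetry; apply: (big_morph (@Tang G)). Qed.

Lemma grp_id (a x b y : G) : -(a + x + (b + y)) + (x + y) = - a - b.
Proof. by rewrite GRing.opprD !GRing.opprD GRing.addrACA !GRing.addrNK. Qed.

Section Gen.
Variables (n : nat) (M A : 'M[R]_n) (c d : 'I_n -> G) (pi rho : 'S_n).
Hypothesis hA : forall i j, nu (A i j) = nu (mul (Tang (c i + d j)) (M (pi i) (rho j))).

Lemma aw_A (s : 'S_n) j :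
  nu (aw A j s) = nu (mul (Tang (\sum_(l < n | l != j) c l + \sum_(m < n | m != s j) d m))
                          (aw M (pi j) (pi^-1 * s * rho)%g)).
Proof.
rewrite /aw (@nu_prod_congr _ _ _ _ (fun l => mul (Tang (c l + d (s l))) (M (pi l) (rho (s l))))); last by move=> l _; apply: hA.
congr nu; rewrite big_split; congr (mul _ _).
  have e1 : \sum_(m < n | m != s j) d m = \sum_(l < n | l != j) d (s l).
    rewrite (reindex_inj (@perm_inj _ s)) /=; apply: eq_bigl => l.
    by rewrite (inj_eq perm_inj).
  by rewrite e1 -big_split /= prod_tang.
rewrite [RHS](reindex_inj (@perm_inj _ pi)) /=; apply: eq_big => l.
  by rewrite (inj_eq perm_inj).
by move=> _; rewrite !permM permK.
Qed.

Lemma pw_A (s : 'S_n) :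
  nu (pw A s) = nu (mul (Tang (\sum_(l < n) c l + \sum_(m < n) d m))
                          (pw M (pi^-1 * s * rho)%g)).
Proof.
rewrite /pw (@nu_prod_congr _ _ _ _ (fun l => mul (Tang (c l + d (s l))) (M (pi l) (rho (s l))))); last by move=> l _; apply: hA.
congr nu; rewrite big_split; congr (mul _ _).
  have e1 : \sum_(m < n) d m = \sum_(l < n) d (s l).
    by rewrite (reindex_inj (@perm_inj _ s)).
  by rewrite e1 -big_split /= prod_tang.
rewrite [RHS](reindex_inj (@perm_inj _ pi)) /=; apply: eq_bigr => l _.
by rewrite !permM permK.
Qed.

Lemma perm_back (t : 'S_n) : (pi^-1 * (pi * t * rho^-1) * rho)%g = t.
Proof. by rewrite !mulgA mulVg mul1g -mulgA mulVg mulg1. Qed.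

Lemma adj_A i j :
  nu (stadj le A i j) = nu (mul (Tang (\sum_(l < n | l != j) c l + \sum_(m < n | m != i) d m))
                               (stadj le M (rho i) (pi j))).
Proof.
apply: vle_nu.
  rewrite -(stmul1m (stadj le A i j)); apply: adj_ub => s sj; rewrite stmul1m.
  rewrite (@vle_nu_eq _ _ _ (aw_A s j)) sj.
  apply: vle_mul; first exact: vle_refl.
  by apply: adj_lb; rewrite !permM permK sj.
apply: adj_ub => t ht.
pose s := (pi * t * rho^-1)%g.
have sj : s j = i by rewrite /s !permM ht permK.
apply: vle_trans (adj_lb A sj).
by rewrite (@vle_nu_eqr _ _ _ (aw_A s j)) perm_back sj; apply: vle_refl.
Qed.

Lemma det_A :
  nu (stdet le A) = nu (mul (Tang (\sum_(l < n) c l + \sum_(m < n) d m)) (stdet le M)).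
Proof.
apply: vle_nu.
  rewrite -(stmul1m (stdet le A)); apply: det_ub => s; rewrite stmul1m.
  rewrite (@vle_nu_eq _ _ _ (pw_A s)).
  by apply: vle_mul; [exact: vle_refl | exact: det_lb].
apply: det_ub => t.
pose s := (pi * t * rho^-1)%g.
apply: vle_trans (det_lb A s).
by rewrite (@vle_nu_eqr _ _ _ (pw_A s)) perm_back; apply: vle_refl.
Qed.

Lemma nabla_A i j :
  nu (stnabla le A i j) = nu (mul (Tang (- c j - d i)) (stnabla le M (rho i) (pi j))).
Proof.
have -> : stnabla le A i j = mul (stinv (stdet le A)) (stadj le A i j) by rewrite [LHS]mxE.
have -> : stnabla le M (rho i) (pi j) =
   mul (stinv (stdet le M)) (stadj le M (rho i) (pi j)) by rewrite [LHS]mxE.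
rewrite nu_mul nu_stinv det_A adj_A -nu_stinv -nu_mul; congr nu.
rewrite stinv_mul stmulACA; congr (mul _ _).
rewrite /= (bigD1 j) //= (bigD1 i (P := predT)) //=; congr Tang.
set X := \sum_(i0 < n | i0 != j) c i0; set Y := \sum_(i0 < n | i0 != i) d i0.
by rewrite grp_id.
Qed.

End Gen.

Definition isNI (x : R) := if x is NegInf then true else false.

Lemma vle_NI (x : R) : vle x (NegInf G) -> x = NegInf G. Proof. by case: x. Qed.

Lemma big_NI (I : finType) (F : I -> R) :
  \big[add/zero]_i F i = NegInf G -> forall i, F i = NegInf G.
Proof. by move=> h i; apply: vle_NI; rewrite -h; apply: (@vle_bigT _ predT). Qed.

Lemma big_allNI (I : finType) (F : I -> R) :
  (forall i, F i = NegInf G) -> \big[add/zero]_i F i = NegInf G.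
Proof. by move=> h; apply: (big_ind (fun x => x = NegInf G)) => // x y -> ->. Qed.

Lemma mul_NI (x y : R) : mul x y = NegInf G -> isNI x || isNI y.
Proof. by case: x; case: y. Qed.

Lemma mul_one_tang (x y : R) : mul x y = one -> exists a, y = Tang a.
Proof. by case: x => [a|a|]; case: y => [b|b|] //= _; exists b. Qed.

Lemma addx0 (x : R) : add x (NegInf G) = x. Proof. by case: x. Qed.

Lemma big_single_seq (I : eqType) (r : seq I) (F : I -> R) i0 :
  uniq r -> (forall i, i != i0 -> F i = NegInf G) ->
  \big[add/zero]_(i <- r) F i = if i0 \in r then F i0 else NegInf G.
Proof.
move=> ur hF; elim: r ur => [|a r IH]; first by rewrite big_nil.
move=> /= /andP [ar ur]; rewrite big_cons inE IH //.
case: (eqVneq a i0) => [ea|ai].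
  by move: ar; rewrite ea => /negbTE ->; rewrite addx0.
by rewrite hF.
Qed.

Lemma big_single (I : finType) (F : I -> R) i0 :
  (forall i, i != i0 -> F i = NegInf G) -> \big[add/zero]_i F i = F i0.
Proof.
by move=> h; rewrite (@big_single_seq _ _ _ i0) ?index_enum_uniq ?mem_index_enum.
Qed.

Lemma inv_gp n (P : 'M[R]_n) : invertible le P ->
  exists (pi : 'S_n) (c : 'I_n -> G),
    forall i j, P i j = if j == pi i then Tang (c i) else NegInf G.
Proof.
case=> B [PB BP].
have ePB i j : \big[add/zero]_(k < n) mul (P i k) (B k j) = if i == j then one else zero.
  by have := congr1 (fun X : 'M[R]_n => X i j) PB; rewrite !mxE.
have eBP i j : \big[add/zero]_(k < n) mul (B i k) (P k j) = if i == j then one else zero.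
  by have := congr1 (fun X : 'M[R]_n => X i j) BP; rewrite !mxE.
pose f i := odflt i [pick k | ~~ isNI (P i k) && ~~ isNI (B k i)].
have fP i : ~~ isNI (P i (f i)) && ~~ isNI (B (f i) i).
  rewrite /f; case: pickP => [k hk //| h0].
  have : \big[add/zero]_(k < n) mul (P i k) (B k i) = NegInf G.
    apply: big_allNI => k; move/negbT: (h0 k); rewrite negb_and !negbK.
    by case: (P i k); case: (B k i).
  by rewrite ePB eqxx.
have rowB i j : j != i -> B (f i) j = NegInf G.
  move=> ji; have := ePB i j; rewrite eq_sym (negbTE ji) => /big_NI /(_ (f i)).
  move/mul_NI; case/andP: (fP i) => /negbTE -> _ /=.
  by case: (B (f i) j).
have f_inj : injective f.
  move=> i i' e; apply/eqP; apply/negPn/negP => ii'.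
  have := rowB i i'; rewrite eq_sym => /(_ ii'); rewrite e.
  by case/andP: (fP i') => _; case: (B (f i') i').
pose pi := perm f_inj.
have colP i j : j != f i -> P i j = NegInf G.
  move=> jf; have := eBP (f i) j; rewrite eq_sym (negbTE jf) => /big_NI /(_ i).
  move/mul_NI; case/andP: (fP i) => _ /negbTE -> /=.
  by case: (P i j).
have diag i : exists a, P i (f i) = Tang a.
  have := eBP (f i) (f i); rewrite eqxx (@big_single _ _ i).
    exact: mul_one_tang.
  by move=> k ki; rewrite rowB.
exists pi, (fun i => if P i (pi i) is Tang a then a else 0) => i j.
rewrite permE; case: (eqVneq j (f i)) => [->|jf]; last exact: colP.
by have [a ->] := diag i.
Qed.

Section GP.
Variables (n : nat) (P : 'M[R]_n) (pi : 'S_n) (c : 'I_n -> G).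
Hypothesis hP : forall i j, P i j = if j == pi i then Tang (c i) else NegInf G.

Lemma GPl (X : 'M[R]_n) i j :
  nu (stmx_mul le P X i j) = nu (mul (Tang (c i)) (X (pi i) j)).
Proof.
rewrite mxE; apply: vle_nu.
  apply: big_vle_ub => k _; rewrite hP; case: eqP => [->|_] //; exact: vle_refl.
apply: vle_trans (@vle_bigT _ predT _ (pi i) isT).
by rewrite hP eqxx; apply: vle_refl.
Qed.

Lemma GPr (X : 'M[R]_n) i j :
  nu (stmx_mul le X P i j) = nu (mul (X i (pi^-1 j)%g) (Tang (c (pi^-1 j)%g))).
Proof.
rewrite mxE; apply: vle_nu.
  apply: big_vle_ub => k _; rewrite hP; case: eqP => [->|_]; last by rewrite mulx0.
  by rewrite permK; apply: vle_refl.
apply: vle_trans (@vle_bigT _ predT _ (pi^-1 j)%g isT).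
by rewrite hP permKV eqxx; apply: vle_refl.
Qed.
End GP.

Lemma mulTT (a b : G) : mul (Tang a) (Tang b) = Tang (a + b). Proof. by []. Qed.

Lemma main_thm (n : nat) (A P Q Abar Atil : 'M[stelt G]_n) :
  nonsingular le A ->
  invertible le P -> definite le Abar -> A = stmx_mul le P Abar ->
  invertible le Q -> definite le Atil -> A = stmx_mul le Atil Q ->
  ((nu_equiv (stnabla le (stnabla le Abar)) (stnabla le Abar) /\
    nu_equiv (stnabla le Abar) (stmx_mul le (stnabla le A) A)) /\
   (nu_equiv (stnabla le (stnabla le Atil)) (stnabla le Atil) /\
    nu_equiv (stnabla le Atil) (stmx_mul le A (stnabla le A)))) /\
  nu_equiv (stnabla le (stnabla le A))
    (stmx_mul le P (stmx_mul le (stnabla le A) P)).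
Proof.
move=> _ invP [dAb1 dAb2] eA invQ [dAt1 dAt2] eA'.
have hpwAb : forall s, vle (pw Abar s) one.
  by move=> s; rewrite -dAb2; apply: det_lb.
have hpwAt : forall s, vle (pw Atil s) one.
  by move=> s; rewrite -dAt2; apply: det_lb.
have [pi [c hP]] := inv_gp invP.
have [rh [e hQ]] := inv_gp invQ.
have hA : forall i j, nu (A i j) =
    nu (mul (Tang (c i + (fun _ => 0) j)) (Abar (pi i) ((1%g : 'S_n) j))).
  by move=> i j; rewrite eA (GPl hP) GRing.addr0 perm1.
have nabA : forall i j, nu (stnabla le A i j) =
    nu (mul (Tang (- c j)) (stadj le Abar i (pi j))).
  move=> i j; rewrite (nabla_A hA) GRing.subr0 perm1 (nablaM dAb2) //.
have hA2 : forall i j, nu (A i j) =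
    nu (mul (Tang ((fun _ => 0) i + e (rh^-1 j)%g)) (Atil ((1%g : 'S_n) i) ((rh^-1)%g j))).
  by move=> i j; rewrite eA' (GPr hQ) GRing.add0r perm1 stmulC.
have nabA2 : forall i j, nu (stnabla le A i j) =
    nu (mul (Tang (- e (rh^-1 i)%g)) (stadj le Atil ((rh^-1)%g i) j)).
  move=> i j; rewrite (nabla_A hA2) GRing.oppr0 GRing.sub0r perm1 (nablaM dAt2) //.
split; [split; split|].
- by move=> i j; rewrite (nablaM dAb2) (nablaD_nu dAb1 hpwAb).
- move=> i j; rewrite (nablaM dAb2) [in RHS]mxE; apply: vle_nu.
    apply: (vle_trans _ (vle_bigT1 _ ((pi^-1)%g j))).
    rewrite -vle_nu_r nu_mul nabA hA -!nu_mul vle_nu_r permKV perm1 GRing.addr0.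
    rewrite stmulACA mulTT GRing.addNr mulT0 dAb1 mulx1; exact: vle_refl.
  apply: big_vle_ub => k _.
  rewrite -vle_nu_l nu_mul nabA hA -!nu_mul vle_nu_l perm1 GRing.addr0.
  rewrite stmulACA mulTT GRing.addNr mulT0; exact: C3.
- by move=> i j; rewrite (nablaM dAt2) (nablaD_nu dAt1 hpwAt).
- move=> i j; rewrite (nablaM dAt2) [in RHS]mxE; apply: vle_nu.
    apply: (vle_trans _ (vle_bigT1 _ (rh i))).
    rewrite -vle_nu_r nu_mul nabA2 hA2 -!nu_mul vle_nu_r permK perm1 GRing.add0r.
    rewrite stmulACA mulTT GRing.addrN mulT0 dAt1 stmul1m; exact: vle_refl.
  apply: big_vle_ub => k _.
  rewrite -vle_nu_l nu_mul nabA2 hA2 -!nu_mul vle_nu_l perm1 GRing.add0r.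
  rewrite stmulACA mulTT GRing.addrN mulT0.
  apply: vle_trans (C4 dAt1 hpwAt i ((rh^-1)%g k) j).
  by apply: vle_mul; [exact: C2 | exact: vle_refl].
- move=> i j.
  have hN : forall i j, nu (stnabla le A i j) =
      nu (mul (Tang ((fun _ => 0) i + (fun j => - c j) j))
              (stadj le Abar ((1%g : 'S_n) i) (pi j))).
    by move=> i' j'; rewrite GRing.add0r perm1; apply: nabA.
  rewrite (nabla_A hN) nu_mul (nablaD_nu dAb1 hpwAb) -nu_mul perm1.
  rewrite GRing.oppr0 GRing.sub0r GRing.opprK.
  rewrite [RHS](GPl hP) [RHS]nu_mul [in RHS](GPr hP) [in RHS]nu_mul [in RHS]nabA -!nu_mul permKV.
  congr nu; congr (mul _ _).
  by rewrite stmulC stmulA mulTT GRing.addrN mulT0.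
Qed.

End Main.

Theorem corollary3p4 (G : zmodType) (le : rel G) (HG : is_oag le) (n : nat)
  (A P Q Abar Atil : 'M[stelt G]_n) :
  nonsingular le A ->
  invertible le P -> definite le Abar -> A = stmx_mul le P Abar ->
  invertible le Q -> definite le Atil -> A = stmx_mul le Atil Q ->
  ((nu_equiv (stnabla le (stnabla le Abar)) (stnabla le Abar) /\
    nu_equiv (stnabla le Abar) (stmx_mul le (stnabla le A) A)) /\
   (nu_equiv (stnabla le (stnabla le Atil)) (stnabla le Atil) /\
    nu_equiv (stnabla le Atil) (stmx_mul le A (stnabla le A)))) /\
  nu_equiv (stnabla le (stnabla le A))
    (stmx_mul le P (stmx_mul le (stnabla le A) P)).
Proof. exact: main_thm. Qed.
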